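(* Let $M$ be a collectible reward decomposition MDP with initial state $s_0$, discount factor $\gamma\in(0,1)$ and $n$ rewards located at states $s_1,\dots,s_n$, and let $o_1,\dots,o_n$ be options where $o_j$ moves the agent along a shortest path to $s_j$ and terminates upon collecting the reward there; let $V_j(i)$ denote the value (discounted return $\gamma^{\text{time to reach } s_j}$) of following $o_j$ from state $s_i$. Define a graph $G$ whose nodes are $s_0,s_1,\dots,s_n$ and in which the edge $e_{i,j}$ has length $d_{i,j}=\log_\gamma\big(V_j(i)\big)$. Then an optimal policy for $M$ (maximizing the expected discounted sum of collected rewards) can be derived by solving the RD-TSP on $G$: following, in the order given by an optimal RD-TSP solution, the options $o_{i_1},o_{i_2},\dots,o_{i_n}$ yields an optimal policy for $M$.
   Context: A collectible reward decomposition MDP is an MDP $M$ with deterministic dynamics whose reward is $R_M=\sum_{i=1}^n R_i$, where each $R_i$ is a collectible reward: $R_i(s)=1$ iff $s=s_i$ for a particular state $s_i$ and $0$ otherwise, and each reward can be collected only once (the set of already collected rewards is part of the state). The agent starts at $s_0$ and maximizes the discounted return with discount $\gamma$. The RD-TSP (reward discounted traveling salesman problem) on an undirected graph with a start node $i_0=s_0$, nodes $1,\dots,n$ and edge lengths $d_{i,j}$ asks for a permutation $(i_1,\dots,i_n)$ of $\{1,\dots,n\}$ maximizing $\sum_{j=0}^{n-1}\gamma^{\sum_{t=0}^{j} d_{i_t,i_{t+1}}}$. *)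

(* Defs.v *)
From mathcomp Require Import all_boot all_order all_fingroup all_algebra.
From mathcomp Require Import all_classical all_reals all_analysis.
Import Order.TTheory GRing.Theory Num.Theory.
Set Implicit Arguments. Unset Strict Implicit. Unset Printing Implicit Defensive.
Local Open Scope ring_scope.

Section CollectibleMDP.
Variables (R : realType) (S : eqType) (A : Type).
Variable step : S -> A -> S.

Fixpoint traj (x : S) (alpha : nat -> A) (t : nat) : S :=
  if t is u.+1 then step (traj x alpha u) (alpha u) else x.

Fixpoint otraj (o : S -> A) (x : S) (t : nat) : S :=
  if t is u.+1 then let y := otraj o x u in step y (o y) else x.

Definition reachable (x y : S) : Prop := exists alpha k, traj x alpha k = y.

(* the state sequence xs visits y at time t for the first time, i.e. a
   collectible reward located at y (not yet collected) is collected at t *)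
Definition first_hit (xs : nat -> S) (y : S) (t : nat) : bool :=
  (xs t == y) && [forall u : 'I_t, xs u != y].

Definition disc_return (gamma : R) (n : nat) (sr : 'I_n -> S) (xs : nat -> S) : R :=
  limn (fun N => \sum_(t < N) gamma ^+ t * (\sum_(i < n) (first_hit xs (sr i) t)%:R)).

Definition mdp_value (gamma : R) (n : nat) (sr : 'I_n -> S) (s0 : S)
  (alpha : nat -> A) : R := disc_return gamma sr (traj s0 alpha).

Definition shortest_path_option (y : S) (o : S -> A) : Prop :=
  forall x, reachable x y ->
    exists m, otraj o x m = y /\
      forall alpha k, traj x alpha k = y -> (m <= k)%N.

(* value V(x) of the option o (targeting y) from x: discounted return of
   the single reward at y, collected upon arrival, where the option terminates *)
Definition option_value (gamma : R) (y : S) (o : S -> A) (x : S) : R :=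
  limn (fun N => \sum_(t < N) gamma ^+ t * (first_hit (otraj o x) y t)%:R).

Definition log_base (gamma x : R) : R := ln x / ln gamma.

Definition edge_len (gamma : R) (n : nat) (sr : 'I_n -> S) (o : 'I_n -> S -> A)
  (x : S) (j : 'I_n) : R := log_base gamma (option_value gamma (sr j) (o j) x).

(* RD-TSP objective for the tour s0 -> sr (p 0) -> ... -> sr (p (n-1)):
   sum_{j<n} gamma ^ (sum_{t<=j} d_{i_t, i_{t+1}}) *)
Definition tour_prev (n : nat) (sr : 'I_n -> S) (s0 : S) (p : 'S_n) (t : nat) : S :=
  nth s0 (s0 :: [seq sr (p i) | i <- enum 'I_n]) t.

Definition rdtsp_obj (gamma : R) (n : nat) (sr : 'I_n -> S) (o : 'I_n -> S -> A)
  (s0 : S) (p : 'S_n) : R :=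
  \sum_(j < n) powR gamma
     (\sum_(t < n | (t <= j)%N) edge_len gamma sr o (tour_prev sr s0 p t) (p t)).

(* execution of the options o_{p 0}, o_{p 1}, ..., o_{p (n-1)} in that order:
   the pair (current state, index k of the option currently executed); option
   o_{p k} terminates when its target sr (p k) is reached; after the last
   option terminates the (irrelevant) default action a0 is used *)
Definition option_list (n : nat) (sr : 'I_n -> S) (o : 'I_n -> S -> A) (p : 'S_n) :=
  [seq (sr (p i), o (p i)) | i <- enum 'I_n].

Fixpoint exec_opts (n : nat) (sr : 'I_n -> S) (o : 'I_n -> S -> A) (p : 'S_n)
  (s0 : S) (a0 : A) (t : nat) : S * nat :=
  if t is u.+1 then
    let (x, k) := exec_opts sr o p s0 a0 u in
    if (k < n)%N then
      let (y, oj) := nth (s0, fun _ => a0) (option_list sr o p) k in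
      let x' := step x (oj x) in (x', if x' == y then k.+1 else k)
    else (step x a0, k)
  else (s0, 0%N).

Definition opts_action (n : nat) (sr : 'I_n -> S) (o : 'I_n -> S -> A) (p : 'S_n)
  (s0 : S) (a0 : A) (t : nat) : A :=
  let (x, k) := exec_opts sr o p s0 a0 t in
  if (k < n)%N then (nth (s0, fun _ => a0) (option_list sr o p) k).2 x else a0.

End CollectibleMDP.

(* Main.v *)
Require Import Defs.
From mathcomp Require Import all_boot all_order all_fingroup all_algebra.
From mathcomp Require Import all_classical all_reals all_analysis.
Import Order.TTheory GRing.Theory Num.Theory.
Import numFieldNormedType.Exports.
Local Open Scope ring_scope.
Set Implicit Arguments. Unset Strict Implicit. Unset Printing Implicit Defensive.

Section Aux.
Variables (R : realType) (S : eqType) (A : Type) (step : S -> A -> S).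
Variables (gamma : R) (n : nat) (s0 : S) (sr : 'I_n -> S) (o : 'I_n -> S -> A).
Hypothesis g01 : 0 < gamma < 1.

Lemma otraj_traj (oo : S -> A) x t :
  otraj step oo x t = traj step x (fun u => oo (otraj step oo x u)) t.
Proof. by elim: t => //= t ->. Qed.

Lemma traj_shift x alpha a k :
  traj step x alpha (a + k) = traj step (traj step x alpha a) (fun u => alpha (a + u)) k.
Proof. by elim: k => [|k IH]; rewrite ?addn0 // addnS /= IH. Qed.

Lemma fh_uniq (xs : nat -> S) (y : S) t t' : first_hit xs y t -> first_hit xs y t' -> t = t'.
Proof.
move=> /andP[/eqP h1 /forallP f1] /andP[/eqP h2 /forallP f2].
case: (ltngtP t t') => // lt.
  by move: (f2 (Ordinal lt)); rewrite /= h1 eqxx.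
by move: (f1 (Ordinal lt)); rewrite /= h2 eqxx.
Qed.

Lemma fh_exists (xs : nat -> S) (y : S) t0 : xs t0 = y -> exists2 T, (T <= t0)%N & first_hit xs y T.
Proof.
move=> h.
have ex : exists t, xs t == y by exists t0; rewrite h.
case: (ex_minnP ex) => T /eqP hT min.
exists T; first by apply: min; rewrite h.
rewrite /first_hit hT eqxx /=; apply/forallP => u; apply/negP => /eqP hu.
by have := min u; rewrite hu eqxx => /(_ isT); rewrite leqNgt ltn_ord.
Qed.

Definition fsum (xs : nat -> S) (y : S) N := \sum_(t < N) gamma ^+ t * (first_hit xs y t)%:R.

Lemma fsum_pick (xs : nat -> S) (y : S) N : fsum xs y N =
  if [pick t : 'I_N | first_hit xs y t] is Some t then gamma ^+ t else 0.
Proof.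
rewrite /fsum; case: pickP => [t ht|none].
  rewrite (bigD1 t) //= ht mulr1 big1 ?addr0 // => i ne.
  case hi: (first_hit xs y i); last by rewrite mulr0.
  by move: ne; have := fh_uniq hi ht => /val_inj ->; rewrite eqxx.
by rewrite big1 // => i _; rewrite none mulr0.
Qed.

Lemma fsum_ge (xs : nat -> S) (y : S) N t0 : xs t0 = y -> (t0 < N)%N -> gamma ^+ t0 <= fsum xs y N.
Proof.
move=> h lt; case: (fh_exists h) => T le fh.
have TN : (T < N)%N by apply: leq_ltn_trans lt.
rewrite /fsum (bigD1 (Ordinal TN)) //= fh mulr1.
apply: le_trans (_ : gamma ^+ T <= _).
  by apply: ler_wiXn2l => //; case/andP: g01 => /ltW ? /ltW.
rewrite lerDl sumr_ge0 // => i _; apply: mulr_ge0 => //.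
by apply: exprn_ge0; case/andP: g01 => /ltW.
Qed.

Lemma partial_fsum (xs : nat -> S) N :
  \sum_(t < N) gamma ^+ t * (\sum_(i < n) (first_hit xs (sr i) t)%:R)
  = \sum_(i < n) fsum xs (sr i) N.
Proof.
rewrite /fsum exchange_big /=; apply: eq_bigr => t _; by rewrite mulr_sumr.
Qed.


Lemma fsum_exact (xs : nat -> S) (y : S) m N :
  (forall t, first_hit xs y t = (t == m)) -> (m < N)%N -> fsum xs y N = gamma ^+ m.
Proof.
move=> h mN; rewrite /fsum (bigD1 (Ordinal mN)) //= h eqxx mulr1 big1 ?addr0 //.
move=> i ne; rewrite h; case: eqP => [e|_]; last by rewrite mulr0.
have ei : i = Ordinal mN by apply: val_inj.
by move: ne; rewrite ei eqxx.
Qed.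

Lemma el_spec (x : S) (j : 'I_n) :
  shortest_path_option step (sr j) (o j) -> reachable step x (sr j) ->
  exists m, [/\ edge_len step gamma sr o x j = m%:R,
     otraj step (o j) x m = sr j,
     (forall s, (s < m)%N -> otraj step (o j) x s != sr j) &
     (forall alpha k, traj step x alpha k = sr j -> (m <= k)%N)].
Proof.
move=> sp rx; case: (sp x rx) => m [hm hmin].
have hlt : forall s, (s < m)%N -> otraj step (o j) x s != sr j.
  move=> s sm; apply/eqP => hs.
  have := hmin (fun u => o j (otraj step (o j) x u)) s; rewrite -otraj_traj => /(_ hs); by rewrite leqNgt sm.
exists m; split => //.
have fhE : forall t, first_hit (otraj step (o j) x) (sr j) t = (t == m).
  move=> t; rewrite /first_hit; case: (ltngtP t m) => c.
  - by rewrite (negbTE (hlt _ c)).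
  - apply/andP => -[_ /forallP /(_ (Ordinal c))]; by rewrite /= hm eqxx.
  - rewrite c hm eqxx /=; apply/forallP => u; exact: hlt.
have ov : option_value step gamma (sr j) (o j) x = gamma ^+ m.
  rewrite /option_value; apply: lim_near_cst => //.
  near=> N; rewrite -/(fsum _ _ N); apply: fsum_exact => //.
  near: N; exact: nbhs_infty_gt.
have lg : ln gamma != 0 by rewrite lt_eqF // ln_lt0.
have g0 : 0 < gamma by case/andP: g01.
rewrite /edge_len /log_base ov lnXn // -[ln gamma *+ m]mulr_natr [ln gamma * _]mulrC mulfK //.
Unshelve. all: by end_near.
Qed.

Lemma tour_prev0 (q : 'S_n) : tour_prev sr s0 q 0 = s0.
Proof. by []. Qed.

Lemma tour_prevS (q : 'S_n) (i : 'I_n) : tour_prev sr s0 q i.+1 = sr (q i).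
Proof. by rewrite /tour_prev /= (nth_map i) ?size_enum_ord // nth_ord_enum. Qed.

Definition Dq (q : 'S_n) (j : nat) :=
  \sum_(t < n | (t <= j)%N) edge_len step gamma sr o (tour_prev sr s0 q t) (q t).

Lemma D0 (q : 'S_n) (j : 'I_n) : val j = 0%N ->
  Dq q 0 = edge_len step gamma sr o s0 (q j).
Proof.
move=> j0; rewrite /Dq (big_pred1 j) => [|t]; first by rewrite /tour_prev j0.
rewrite leqn0 -j0.
by apply/eqP/eqP => [h|-> //]; apply: val_inj.
Qed.

Lemma Dsplit (q : 'S_n) (i j : 'I_n) : val j = i.+1 ->
  Dq q j = Dq q i + edge_len step gamma sr o (sr (q i)) (q j).
Proof.
move=> ji; rewrite /Dq (bigD1 j) /= ?ji // addrC; congr (_ + _).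
  apply: eq_bigl => t; rewrite -(inj_eq val_inj) ji /= andbC -ltn_neqAle ltnS //.
by rewrite tour_prevS.
Qed.

Lemma reach_prev (q : 'S_n) (k : 'I_n) j :
  (forall j, reachable step s0 (sr j)) -> (forall i j, reachable step (sr i) (sr j)) ->
  reachable step (tour_prev sr s0 q k) (sr j).
Proof.
move=> r0 r1; case: k => [[|k] kn] //=.
by rewrite (tour_prevS q (Ordinal (ltnW kn))).
Qed.

End Aux.

Section Main.
Variables (R : realType) (S : eqType) (A : Type) (step : S -> A -> S).
Variables (gamma : R) (n : nat) (s0 : S) (sr : 'I_n -> S) (o : 'I_n -> S -> A).
Unset Implicit Arguments.
Hypothesis g01 : 0 < gamma < 1.
Hypothesis sr_inj : injective sr.
Hypothesis sr_s0 : forall i, sr i != s0.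
Hypothesis r0 : forall j, reachable step s0 (sr j).
Hypothesis r1 : forall i j, reachable step (sr i) (sr j).
Hypothesis sp : forall j, shortest_path_option step (sr j) (o j).

Set Implicit Arguments.
Let g0 : 0 < gamma. Proof. by case/andP: g01. Qed.
Let g1 : gamma <= 1. Proof. by case/andP: g01 => _ /ltW. Qed.

Lemma gpow (k : nat) (D : R) : D <= k%:R -> gamma ^+ k <= powR gamma D.
Proof.
move=> le; rewrite -powR_mulrn; last exact: ltW.
have h : 0 < gamma <= 1 by apply/andP.
exact: (ger_powR h le).
Qed.

Section Upper.
Variables (alpha : nat -> A) (N : nat).
Let xs := traj step s0 alpha.

Definition key (i : 'I_n) : nat :=
  if [pick t : 'I_N | first_hit xs (sr i) t] is Some t then val t else (N + i)%N.

Lemma keyS i : (key i < N)%N -> xs (key i) = sr i.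
Proof.
rewrite /key; case: pickP => [t /andP[/eqP h _] _ //|_].
by rewrite ltnNge leq_addr.
Qed.

Lemma fsum_key i : fsum gamma xs (sr i) N = if (key i < N)%N then gamma ^+ key i else 0.
Proof.
rewrite fsum_pick /key; case: pickP => [t _|_]; first by rewrite ltn_ord.
by rewrite ltnNge leq_addr.
Qed.

Lemma key_inj : injective key.
Proof.
move=> a b; rewrite /key.
case: pickP => [t /andP[/eqP ht _]|_]; case: pickP => [t' /andP[/eqP ht' _]|_].
- by move=> e; apply: sr_inj; rewrite -ht -ht' e.
- by move=> e; have := ltn_ord t; rewrite e ltnNge leq_addr.
- by move=> e; have := ltn_ord t'; rewrite -e ltnNge leq_addr.
- by move/eqP; rewrite eqn_add2l => /eqP /val_inj.
Qed.

Definition rank (i : 'I_n) : nat := #|[pred i' | (key i' < key i)%N]|.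

Lemma rank_lt i : (rank i < n)%N.
Proof.
have n0 : (0 < n)%N by apply: leq_ltn_trans (ltn_ord i).
apply: leq_trans (_ : (#|predC1 i|).+1 <= n)%N.
  rewrite ltnS /rank; apply/subset_leq_card/fintype.subsetP => t /=.
  rewrite !inE => lt; apply/eqP => e; by move: lt; rewrite e ltnn.
by rewrite cardC1 card_ord prednK.
Qed.

Lemma rank_mono a b : (key a < key b)%N -> (rank a < rank b)%N.
Proof.
move=> lt; rewrite /rank; apply: proper_card; apply/fintype.properP; split.
  apply/fintype.subsetP => t; rewrite !inE => h; exact: ltn_trans lt.
by exists a; rewrite !inE // ltnn.
Qed.

Lemma rank_inj : injective (fun i => Ordinal (rank_lt i)).
Proof.
move=> a b /(congr1 val) /= e; apply: key_inj.
case: (ltngtP (key a) (key b)) => // c.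
  by have := rank_mono c; rewrite e ltnn.
by have := rank_mono c; rewrite e ltnn.
Qed.

Definition qU : 'S_n := ((perm rank_inj)^-1)%g.

Lemma rank_q j : rank (qU j) = j.
Proof.
have := permKV (perm rank_inj) j; rewrite permE => /(congr1 val) /=.
by rewrite /qU.
Qed.

Lemma key_q_mono (i j : 'I_n) : (i < j)%N -> (key (qU i) < key (qU j))%N.
Proof.
move=> ij; case: (ltngtP (key (qU i)) (key (qU j))) => // c.
  by have := rank_mono c; rewrite !rank_q ltnNge ltnW.
by have := key_inj c => /perm_inj e; move: ij; rewrite e ltnn.
Qed.

Lemma D_key : forall (j : 'I_n), (key (qU j) < N)%N ->
  Dq step gamma s0 sr o qU j <= (key (qU j))%:R.
Proof.
suff H : forall k (j : 'I_n), val j = k -> (key (qU j) < N)%N ->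
  Dq step gamma s0 sr o qU j <= (key (qU j))%:R by move=> j; exact: H.
elim=> [|k IH] j jk kN.
  rewrite jk (D0 step gamma s0 sr o qU jk).
  case: (el_spec g01 (sp (qU j)) (r0 (qU j))) => m [-> _ _ hmin].
  rewrite ler_nat; apply: hmin; exact: keyS.
have kn : (k < n)%N by apply: ltn_trans (ltn_ord j); rewrite jk.
pose i := Ordinal kn.
have ij : (i < j)%N by rewrite jk /=.
have lt := key_q_mono ij.
rewrite jk -{1}jk (Dsplit step gamma s0 sr o qU (i := i)) //.
have := IH i erefl (ltn_trans lt kN) => le1.
case: (el_spec g01 (sp (qU j)) (r1 (qU i) (qU j))) => m [-> _ _ hmin].
have hm : (m <= key (qU j) - key (qU i))%N.
  apply: (hmin (fun u => alpha (key (qU i) + u))).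
  rewrite -(keyS (ltn_trans lt kN)) -traj_shift subnKC ?(ltnW lt) //.
  exact: keyS.
rewrite -(subnKC (ltnW lt)) natrD; apply: lerD => //; by rewrite ler_nat.
Qed.

Lemma upper_q :
  \sum_(t < N) gamma ^+ t * (\sum_(i < n) (first_hit xs (sr i) t)%:R)
  <= rdtsp_obj step gamma sr o s0 qU.
Proof.
rewrite partial_fsum (reindex_inj (@perm_inj _ qU)) /rdtsp_obj.
apply: ler_sum => j _; rewrite fsum_key; case: ifP => kN.
  exact: gpow (D_key kN).
exact: powR_ge0.
Qed.

End Upper.

Section Lower.
Variables (p : 'S_n) (a0 : A).
Let xs := traj step s0 (opts_action step sr o p s0 a0).
Let ex := exec_opts step sr o p s0 a0.

Lemma traj_opts t : xs t = (ex t).1.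
Proof.
rewrite /xs /ex; elim: t => //= t ->; rewrite /opts_action.
case: (exec_opts step sr o p s0 a0 t) => x k /=.
case: ifP => _ //; by case: nth.
Qed.

Lemma nth_ol (k : 'I_n) :
  nth (s0, fun _ => a0) (option_list sr o p) k = (sr (p k), o (p k)).
Proof. by rewrite /option_list (nth_map k) ?size_enum_ord // nth_ord_enum. Qed.

Definition mspec (k : 'I_n) :=
  cid (el_spec g01 (sp (p k)) (reach_prev p k (p k) r0 r1)).
Definition mt (k : 'I_n) : nat := projT1 (mspec k).

Lemma mt_spec (k : 'I_n) :
  [/\ edge_len step gamma sr o (tour_prev sr s0 p k) (p k) = (mt k)%:R,
     otraj step (o (p k)) (tour_prev sr s0 p k) (mt k) = sr (p k),
     (forall s, (s < mt k)%N -> otraj step (o (p k)) (tour_prev sr s0 p k) s != sr (p k)) &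
     (forall alpha k', traj step (tour_prev sr s0 p k) alpha k' = sr (p k) -> (mt k <= k')%N)].
Proof. exact: (projT2 (mspec k)). Qed.

Definition mm (k : nat) : nat := if insub k is Some k' then mt k' else 0%N.
Lemma mmE (k : 'I_n) : mm k = mt k.
Proof. by rewrite /mm valK. Qed.

Definition E (k : nat) : nat := (\sum_(i < k) mm i)%N.

Lemma E_mono d k : (E k <= E (k + d))%N.
Proof.
elim: d => [|d IH]; first by rewrite addn0.
by rewrite addnS /E big_ord_recr /=; apply: leq_trans IH (leq_addr _ _).
Qed.

Lemma prev_ne (k : 'I_n) : tour_prev sr s0 p k != sr (p k).
Proof.
case: k => [[|k] kn].
  by rewrite tour_prev0 eq_sym sr_s0.
rewrite (tour_prevS s0 sr p (Ordinal (ltnW kn))) (inj_eq sr_inj) (inj_eq (@perm_inj _ p)).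
by rewrite -(inj_eq val_inj) /= neq_ltn ltnSn.
Qed.

Lemma exec_inner (k : 'I_n) s : (s <= mt k)%N ->
  ex (E k) = (tour_prev sr s0 p k, val k) ->
  ex (E k + s) = if (s < mt k)%N then (otraj step (o (p k)) (tour_prev sr s0 p k) s, val k)
                 else (sr (p k), (val k).+1).
Proof.
case: (mt_spec k) => _ hm hlt _.
move=> + h; elim: s => [|s IH] sm.
  have m0 : (0 < mt k)%N.
    rewrite lt0n; apply/eqP => e; move: hm; rewrite e /= => e'.
    by move: (prev_ne k); rewrite e' eqxx.
  by rewrite addn0 m0 h.
rewrite addnS /ex /= -/ex IH ?(ltnW sm) // sm ltn_ord nth_ol /=.
set y := step _ _.
have -> : y = otraj step (o (p k)) (tour_prev sr s0 p k) s.+1 by [].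
case: (ltngtP s.+1 (mt k)) => c.
- by rewrite (negbTE (hlt _ c)).
- by move: sm; rewrite leqNgt c.
- by rewrite c hm eqxx.
Qed.

Lemma exec_E k : (k <= n)%N -> ex (E k) = (tour_prev sr s0 p k, k).
Proof.
elim: k => [|k IH] kn; first by rewrite /E big_ord0.
pose kk := Ordinal kn.
have -> : E k.+1 = (E k + mt kk)%N by rewrite /E big_ord_recr /= -(mmE kk).
rewrite (exec_inner (k := kk) (leqnn _)) ?ltnn /=; last exact: IH (ltnW kn).
by rewrite (tour_prevS s0 sr p kk).
Qed.

Lemma xs_E (k : 'I_n) : xs (E k.+1) = sr (p k).
Proof. by rewrite traj_opts exec_E // (tour_prevS s0 sr p k). Qed.

Lemma D_E : forall j : 'I_n, Dq step gamma s0 sr o p j = (E j.+1)%:R.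
Proof.
suff H : forall k (j : 'I_n), val j = k -> Dq step gamma s0 sr o p j = (E j.+1)%:R
  by move=> j; exact: H.
elim=> [|k IH] j jk.
  rewrite jk (D0 step gamma s0 sr o p jk).
  case: (mt_spec j) => e _ _ _; move: e; rewrite /tour_prev jk /= => ->.
  by rewrite /E big_ord_recr big_ord0 /= add0n -jk mmE.
have kn : (k < n)%N by apply: ltn_trans (ltn_ord j); rewrite jk.
pose i := Ordinal kn.
rewrite (Dsplit step gamma s0 sr o p (i := i)) //.
rewrite (IH i erefl).
have jk' : nat_of_ord j = k.+1 by [].
case: (mt_spec j) => e _ _ _; move: e; rewrite jk' (tour_prevS s0 sr p i) => ->.
by rewrite -natrD /E [in RHS]big_ord_recr /= -jk' mmE.
Qed.

Lemma lower : exists N0,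
  rdtsp_obj step gamma sr o s0 p <=
  \sum_(t < N0) gamma ^+ t * (\sum_(i < n) (first_hit xs (sr i) t)%:R).
Proof.
exists (E n).+1; rewrite partial_fsum (reindex_inj (@perm_inj _ p)) /rdtsp_obj.
apply: ler_sum => j _.
rewrite [X in X <= _](_ : _ = powR gamma (Dq step gamma s0 sr o p j)) //.
rewrite D_E powR_mulrn; last exact: ltW.
apply: fsum_ge => //; first exact: xs_E.
rewrite ltnS; have := E_mono (n - j.+1) j.+1; by rewrite subnKC.
Qed.

End Lower.

Lemma u_nd (beta : nat -> A) :
  {homo (fun N => \sum_(t < N) gamma ^+ t *
       (\sum_(i < n) (first_hit (traj step s0 beta) (sr i) t)%:R)) : N M / (N <= M)%N >-> N <= M}.
Proof.
move=> N M NM /=; rewrite -(subnKC NM); elim: (M - N)%N => [|d IH]; first by rewrite addn0.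
rewrite addnS big_ord_recr /=; apply: le_trans IH _; rewrite lerDl.
by apply: mulr_ge0; [exact: exprn_ge0 (ltW g0) | exact: sumr_ge0].
Qed.

Lemma main_le (p : 'S_n) (a0 : A) :
  (forall q : 'S_n, rdtsp_obj step gamma sr o s0 q <= rdtsp_obj step gamma sr o s0 p) ->
  forall alpha : nat -> A,
    mdp_value step gamma sr s0 alpha
      <= mdp_value step gamma sr s0 (opts_action step sr o p s0 a0).
Proof.
move=> popt alpha.
have Ub : forall beta N, \sum_(t < N) gamma ^+ t *
       (\sum_(i < n) (first_hit (traj step s0 beta) (sr i) t)%:R)
     <= rdtsp_obj step gamma sr o s0 p.
  move=> beta N; exact: le_trans (upper_q beta N) (popt _).
have cv : forall beta, cvgn (fun N => \sum_(t < N) gamma ^+ t *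
       (\sum_(i < n) (first_hit (traj step s0 beta) (sr i) t)%:R)).
  move=> beta; apply: nondecreasing_is_cvgn; first exact: u_nd.
  by exists (rdtsp_obj step gamma sr o s0 p) => _ [N _ <-].
rewrite /mdp_value /disc_return.
apply: le_trans (_ : rdtsp_obj step gamma sr o s0 p <= _).
  apply: limr_le; first exact: cv.
  by apply: nearW => N; exact: Ub.
case: (lower p a0) => N0 h; apply: le_trans h _.
apply: nondecreasing_cvgn_le; [exact: u_nd | exact: cv].
Qed.

End Main.

Theorem proposition1 (R : realType) (S : eqType) (A : Type)
  (step : S -> A -> S) (gamma : R) (n : nat) (s0 : S) (sr : 'I_n -> S)
  (o : 'I_n -> S -> A) (p : 'S_n) (a0 : A) :
  0 < gamma < 1 ->
  injective sr ->
  (forall i, sr i != s0) ->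
  (* every reward location is reachable from s0 and from every reward location *)
  (forall j, reachable step s0 (sr j)) ->
  (forall i j, reachable step (sr i) (sr j)) ->
  (* o_j moves the agent along a shortest path to s_j *)
  (forall j, shortest_path_option step (sr j) (o j)) ->
  (* p is an optimal solution of the RD-TSP on G *)
  (forall q : 'S_n, rdtsp_obj step gamma sr o s0 q <= rdtsp_obj step gamma sr o s0 p) ->
  (* following o_{p 0}, ..., o_{p (n-1)} is optimal among all behaviours *)
  forall alpha : nat -> A,
    mdp_value step gamma sr s0 alpha
      <= mdp_value step gamma sr s0 (opts_action step sr o p s0 a0).
Proof.
move=> g01 sri srs r0 r1 sp popt alpha.
exact: (@main_le R S A step gamma n s0 sr o g01 sri srs r0 r1 sp p a0 popt alpha).
Qed.
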